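(* Let $\mathbf L\in\mathbb R^{N\times N}$ be a Laplacian matrix (symmetric, off-diagonal entries $\le0$, $\mathbf L\mathbf 1_N=\mathbf 0$) with second-smallest eigenvalue $\rho_2>0$, and $\hat{\mathbf L}=\mathbf L\otimes\mathbf I_d$. Let $\mathbf A\in\mathbb R^{Nd\times Nd}$ be symmetric with all eigenvalues in $[\mu,L]$, $0<\mu\le L$, let $U>0$ and $\mathbf B=\mathbf A+U\hat{\mathbf L}$. Then for every $\mathbf v\in\mathbb R^{Nd}$ orthogonal to the column space of $\mathbf 1_N\otimes\mathbf I_d$ (i.e., $(\mathbf 1_N\otimes\mathbf I_d)^\top\mathbf v=\mathbf 0$), $$\|\mathbf B^{-1}\mathbf v\|\le\frac1U\cdot\frac{L}{\mu\rho_2}\|\mathbf v\|.$$ *)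

(* Defs.v *)
From HB Require Import structures.
From mathcomp Require Import all_boot all_order all_algebra.
From mathcomp Require Export mxtens.
Set Implicit Arguments. Unset Strict Implicit. Unset Printing Implicit Defensive.
Import Order.TTheory GRing.Theory Num.Theory.
Local Open Scope ring_scope.

Definition vnorm (R : rcfType) (n : nat) (v : 'cV[R]_n) : R :=
  Num.sqrt (\sum_(i < n) v i 0 ^+ 2).

Definition ones (R : rcfType) (n : nat) : 'cV[R]_n := const_mx 1.

Definition is_laplacian (R : rcfType) (n : nat) (L : 'M[R]_n) : Prop :=
  [/\ L^T = L, (forall i j : 'I_n, i != j -> L i j <= 0) & L *m ones R n = 0].

(* r is the second-smallest eigenvalue of M counted with multiplicity:
   the characteristic polynomial of M factors as prod (X - x) over a
   nondecreasingly sorted list s of eigenvalues, and r is s`_1. *)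
Definition second_smallest_eig (R : rcfType) (n : nat) (M : 'M[R]_n) (r : R)
  : Prop :=
  exists s : seq R,
    [/\ sorted <=%R s, char_poly M = \prod_(x <- s) ('X - x%:P) &
        nth 0 s 1 = r].

(* Main.v *)
Require Import Defs.
From HB Require Import structures.
From mathcomp Require Import all_boot all_order all_algebra.
From mathcomp Require Import mxtens complex spectral sesquilinear mxred.
From mathcomp Require Import ring lra.
Import Order.TTheory GRing.Theory Num.Theory Num.Def.
Local Open Scope ring_scope.

Local Notation "M ^H" := (map_mx conjC (trmx M)) (at level 2, format "M ^H").
Section Gen.
Variable C : numClosedFieldType.

Lemma char_poly_similar n (V B : 'M[C]_n) : V \in unitmx ->
  char_poly (invmx V *m B *m V) = char_poly B.
Proof.
move=> uV; rewrite /char_poly.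
have -> : char_poly_mx (invmx V *m B *m V) =
   map_mx polyC (invmx V) *m char_poly_mx B *m map_mx polyC V.
  rewrite /char_poly_mx mulmxBr mulmxBl. idtac.
  rewrite !map_mxM; congr (_ - _); rewrite -mulmxA -scalar_mxC mulmxA -map_mxM mulVmx // map_mx1 mul1mx.
  by [].
rewrite !det_mulmx !det_map_mx mulrC mulrA -rmorphM -det_mulmx mulmxV //.
by rewrite det1 rmorph1 mul1r.
Qed.

Variable n : nat.
Variable M : 'M[C]_n.
Hypothesis Mh : M = M^H.

Let P := spectralmx M.
Let D := spectral_diag M.

Lemma Pu : P \is unitarymx. Proof. exact: spectral_unitarymx. Qed.
Lemma PuU : P \in unitmx. Proof. exact: spectral_unit. Qed.

Lemma Mdec : M = P^H *m diag_mx D *m P.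
Proof.
have Mn : M \is normalmx.
  by apply/normalmxP; rewrite -Mh.
by rewrite -invmx_unitary ?Pu //; apply/orthomx_spectralP.
Qed.

Lemma PtP : P^H *m P = 1%:M.
Proof. by rewrite -invmx_unitary ?Pu // mulVmx // PuU. Qed.

Lemma Dreal i : D 0 i \is Num.real.
Proof.
have Mh' : M \is hermsymmx by apply/is_hermitianmxP; rewrite expr0 scale1r.
by have /mxOverP := hermitian_spectral_diag_real Mh'; apply.
Qed.

Lemma Deig i : eigenvalue M (D 0 i).
Proof.
apply/eigenvalueP; exists (row i P).
  rewrite -row_mul Mdec !mulmxA -invmx_unitary ?Pu // mulmxV ?PuU // mul1mx.
  by rewrite mul_diag_mx; apply/rowP => j; rewrite !mxE.
apply/negP => /eqP r0.
have := row_free_unit P; rewrite PuU => /row_freeP [Q PQ].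
have : row i (P *m Q) = 0 by rewrite row_mul r0 mul0mx.
by rewrite PQ => /rowP /(_ i); rewrite !mxE eqxx /= => /eqP; rewrite oner_eq0.
Qed.

Lemma Dchar : char_poly M = \prod_(i < n) ('X - (D 0 i)%:P).
Proof.
rewrite {1}Mdec -invmx_unitary ?Pu // char_poly_similar ?PuU //.
by rewrite char_poly_trig ?diag_mx_is_trig //; apply: eq_bigr => i _; rewrite mxE eqxx.
Qed.

Lemma form_dec (z : 'cV[C]_n) :
  (z^H *m M *m z) 0 0 = \sum_i D 0 i * `|(P *m z) i 0| ^+ 2.
Proof.
rewrite {1}Mdec.
have -> : z^H *m (P^H *m diag_mx D *m P) *m z = (P*m z)^H *m (diag_mx D *m (P *m z)).
  by rewrite trmx_mul map_mxM !mulmxA.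
rewrite mul_diag_mx mxE; apply: eq_bigr => i _.
by rewrite !mxE normCK mulrC mulrA.
Qed.

Lemma norm_dec (z : 'cV[C]_n) :
  (z^H *m z) 0 0 = \sum_i `|(P *m z) i 0| ^+ 2.
Proof.
have -> : z^H *m z = z^H *m (P^H *m P *m z) by rewrite PtP mul1mx.
have -> : z^H *m (P^H *m P *m z) = (P*m z)^H *m (P *m z).
  by rewrite trmx_mul map_mxM !mulmxA.
rewrite mxE; apply: eq_bigr => i _.
by rewrite !mxE normCK mulrC.
Qed.

Lemma PM (z : 'cV[C]_n) : P *m (M *m z) = diag_mx D *m (P *m z).
Proof.
rewrite {1}Mdec !mulmxA -invmx_unitary ?Pu // mulmxV ?PuU // mul1mx.
by [].
Qed.

End Gen.
Arguments Dreal {C n M}. Arguments Deig {C n M}. Arguments form_dec {C n M}.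
Arguments norm_dec {C n} M z. Arguments PM {C n M}. Arguments Dchar {C n M}.
Arguments Mdec {C n M}.

Lemma count2 (T : eqType) (P : pred T) (l : seq T) i j : uniq l -> i \in l ->
  j \in l -> i != j -> P i -> P j -> (1 < count P l)%N.
Proof.
move=> ul il jl ij Pi Pj; rewrite -size_filter.
apply: (@uniq_leq_size _ [:: i; j]) => /=; first by rewrite inE ij.
by move=> x; rewrite !inE => /orP [] /eqP ->; rewrite mem_filter ?Pi ?Pj.
Qed.

Lemma s_facts (R : realDomainType) (s : seq R) rho2 : sorted <=%R s ->
  nth 0 s 1 = rho2 -> 0 < rho2 -> 0 \in s ->
  (count_mem (0%R : R) s <= 1)%N /\ forall x, x \in s -> x = 0 \/ rho2 <= x.
Proof.
case: s => [|a [|b t]] /=; try by move=> _ <-; rewrite ltxx.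
move=> /andP [ab pt] <- b0.
have allb := order_path_min le_trans pt.
have tpos : forall x, x \in t -> 0 < x.
  by move=> x xt; apply: lt_le_trans b0 _; apply: (allP allb).
rewrite !inE => H0.
have a0 : a = 0.
  case/orP: H0 => [/eqP // | /orP [/eqP b0' | /tpos]]; first by move: b0; rewrite -b0' ltxx.
  by rewrite ltxx.
split.
  rewrite a0 eqxx (gt_eqF b0) /= add0n.
  have -> : count (pred1 0) t = 0%N.
    apply/eqP; rewrite -leqn0 leqNgt -has_count; apply/hasPn => x /tpos. by rewrite /= lt_def eq_sym => /andP [].
  by [].
move=> x; rewrite !inE => /orP [/eqP -> | /orP [/eqP -> | xt]]; first by left.
  by right.
by right; apply: (allP allb).
Qed.

Section RealA.
Variable R : rcfType.
Local Notation toC := (real_complex R).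

Lemma toC_real (r : R) : toC r \is Num.real.
Proof. by apply/complex_realP; exists r. Qed.

Lemma conj_toC (r : R) : conjC (toC r) = toC r.
Proof. by rewrite conj_Creal ?toC_real. Qed.

Lemma mapH m p (X : 'M[R]_(m, p)) : (map_mx toC X)^H = map_mx toC X^T.
Proof. by apply/matrixP => i j; rewrite !mxE conj_toC. Qed.

Lemma symA_bounds n (A : 'M[R]_n) (mu L : R) : A^T = A -> 0 < mu ->
  (forall a, eigenvalue A a -> mu <= a <= L) -> forall y : 'cV_n,
  mu * (y^T *m y) 0 0 <= (y^T *m A *m y) 0 0 /\ ((A *m y)^T *m (A *m y)) 0 0 <= L ^+ 2 * (y^T *m y) 0 0.
Proof.
move=> AT mu0 eigA y.
set M := map_mx toC A.
have Mh : M = M^H by rewrite /M mapH AT.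
set yc := map_mx toC y.
have Dk : forall i, exists2 k, spectral_diag M 0 i = toC k & mu <= k <= L.
  move=> i; have /complex_realP [k Hk] := Dreal Mh i.
  exists k => //; apply: eigA; move: (Deig Mh i); rewrite Hk /M eigenvalue_map.
  by [].
have e0 : toC ((y^T *m y) 0 0) = (yc^H *m yc) 0 0.
  by rewrite /yc mapH -!map_mxM [RHS]mxE.
split.
  have e1 : toC ((y^T *m A *m y) 0 0) = (yc^H *m M *m yc) 0 0.
    by rewrite /yc /M mapH -!map_mxM [RHS]mxE.
  rewrite -lecR.
  have -> : toC (mu * (y^T *m y) 0 0) = toC mu * toC ((y^T *m y) 0 0) by rewrite rmorphM.
  rewrite e0 e1 (form_dec Mh) (norm_dec M) mulr_sumr.
  apply: ler_sum => i _; have [k -> /andP [hk _]] := Dk i.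
  by apply: ler_wpM2r; [exact: exprn_ge0 | rewrite lecR].
have e2 : toC (((A *m y)^T *m (A *m y)) 0 0) = ((M *m yc)^H *m (M *m yc)) 0 0.
  by rewrite /yc /M -map_mxM mapH -!map_mxM [RHS]mxE.
rewrite -lecR.
have -> : toC (L ^+ 2 * (y^T *m y) 0 0) = toC (L ^+ 2) * toC ((y^T *m y) 0 0) by rewrite rmorphM.
rewrite e0 e2 (norm_dec M (M *m yc)) (PM Mh) (norm_dec M yc) mulr_sumr.
apply: ler_sum => i _; rewrite mul_diag_mx mxE.
have [k -> /andP [hk1 hk2]] := Dk i.
rewrite normrM exprMn; apply: ler_wpM2r; first exact: exprn_ge0.
rewrite real_normK ?toC_real // -rmorphXn lecR.
have k0 : 0 <= k by apply: le_trans hk1; apply: ltW.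
by rewrite !expr2 ler_pM.
Qed.


Lemma lap_bound N (Lap : 'M[R]_N) (rho2 : R) : is_laplacian Lap ->
  second_smallest_eig Lap rho2 -> 0 < rho2 -> forall y : 'cV_N,
  (ones R N)^T *m y = 0 -> rho2 * (y^T *m y) 0 0 <= (y^T *m Lap *m y) 0 0.
Proof.
move=> [LT Loff L1] [s [ss cp s1]] rho0 y y1.
case: N Lap y LT Loff L1 cp y1 => [|N'] Lap y LT Loff L1 cp y1.
  by rewrite !mxE !big_ord0 mulr0.
set M := map_mx toC Lap.
have Mh : M = M^H by rewrite /M mapH LT.
set P := spectralmx M; set D := spectral_diag M.
set yc := map_mx toC y; set oc := map_mx toC (ones R N'.+1).
set w := P *m yc; set u := P *m oc.
have zero_in_s : 0 \in s.
  rewrite -root_prod_XsubC -cp -eigenvalue_root_char; apply/eigenvalueP.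
  exists (ones R N'.+1)^T; first by rewrite scale0r -{1}LT -trmx_mul L1 trmx0.
  apply/negP => /eqP /matrixP /(_ 0 0); rewrite !mxE => /eqP; by rewrite oner_eq0.
have [cnt sfx] := @s_facts _ _ _ ss s1 rho0 zero_in_s.
have f1 : forall i, D 0 i * u i 0 = 0.
  move=> i; have := PM Mh oc; rewrite -/P -/D -/u.
  have -> : M *m oc = 0 by rewrite /M /oc -map_mxM L1 map_mx0.
  by rewrite mulmx0 => /esym /matrixP /(_ i 0); rewrite mul_diag_mx !mxE.
have f2 : \sum_j conjC (u j 0) * w j 0 = 0.
  have : (u^H *m w) 0 0 = 0.
    rewrite /u /w trmx_mul map_mxM -mulmxA (mulmxA P^H) PtP mul1mx.
    by rewrite /oc /yc mapH -map_mxM y1 map_mx0 mxE.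
  move=> H; rewrite -[RHS]H mxE; apply: eq_bigr => j _; by rewrite !mxE.
have f3 : forall i j, D 0 i = 0 -> D 0 j = 0 -> i = j.
  move=> i j Di Dj; apply/eqP; apply/negPn/negP => ij.
  have cpM : \prod_(x <- map toC s) ('X - x%:P) =
             \prod_(x <- [seq D 0 k | k <- enum 'I_N'.+1]) ('X - x%:P).
    rewrite big_map -(map_prod_XsubC toC) -cp map_char_poly -/M (Dchar Mh).
    by rewrite big_map big_enum.
  have /permP /(_ (pred1 0)) := prod_XsubC_eq cpM.
  rewrite count_map count_map.
  have -> : count (preim toC (pred1 0)) s = count (pred1 0) s.
    by apply: eq_count => x /=; rewrite fmorph_eq0.
  move=> E; move: cnt; rewrite E leqNgt.
  by rewrite (@count2 _ _ _ i j) ?enum_uniq ?mem_enum //= ?Di ?Dj.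
have f4 : forall i, D 0 i = 0 \/ exists2 k, D 0 i = toC k & rho2 <= k.
  move=> i; have /complex_realP [k Hk] := Dreal Mh i.
  have : k \in s.
    rewrite -root_prod_XsubC -cp -eigenvalue_root_char.
    by move: (Deig Mh i); rewrite -/D Hk /M eigenvalue_map.
  case/sfx => [k0 | kr]; [left; by rewrite Hk k0 rmorph0 | right; by exists k].
have e0 : toC ((y^T *m y) 0 0) = (yc^H *m yc) 0 0.
  by rewrite /yc mapH -!map_mxM [RHS]mxE.
have e1 : toC ((y^T *m Lap *m y) 0 0) = (yc^H *m M *m yc) 0 0.
  by rewrite /yc /M mapH -!map_mxM [RHS]mxE.
rewrite -lecR.
have -> : toC (rho2 * (y^T *m y) 0 0) = toC rho2 * toC ((y^T *m y) 0 0) by rewrite rmorphM.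
rewrite e0 e1 (form_dec Mh) (norm_dec M) mulr_sumr -/P -/D -/w.
apply: ler_sum => i _.
case: (f4 i) => [Di | [k -> hk]]; last first.
  by apply: ler_wpM2r; [exact: exprn_ge0 | rewrite lecR].
suff -> : w i 0 = 0 by rewrite normr0 expr0n /= !mulr0.
have ui : u i 0 != 0.
  apply/negP => /eqP ui0.
  have u0 : u = 0.
    apply/matrixP => j k; rewrite [k]ord1 [RHS]mxE.
    have [-> //|ji] := eqVneq j i.
    have : D 0 j * u j 0 = 0 by apply: f1.
    move/eqP; rewrite mulf_eq0 => /orP [/eqP Dj | /eqP //].
    by move: ji; rewrite (f3 _ _ Dj Di) eqxx.
  have : oc = 0 by rewrite -[oc]mul1mx -(@PtP _ _ M) -mulmxA -/u u0 mulmx0.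
  by move/matrixP/(_ 0 0); rewrite !mxE rmorph1 => /eqP; rewrite oner_eq0.
move: f2; rewrite (bigD1 i) //= big1 ?addr0.
  by move/eqP; rewrite mulf_eq0 conjC_eq0 (negbTE ui) /= => /eqP.
move=> j ji.
have : D 0 j * u j 0 = 0 by apply: f1.
move/eqP; rewrite mulf_eq0 => /orP [/eqP Dj | /eqP -> ]; last by rewrite conjC0 mul0r.
by move: ji; rewrite (f3 _ _ Dj Di) eqxx.
Qed.

End RealA.

Section Tens.
Variable R : rcfType.

Lemma sum_tens m n (F : 'I_(m * n) -> R) :
  \sum_t F t = \sum_i \sum_j F (mxtens_index (i, j)).
Proof.
rewrite pair_big /=; apply: reindex => //=.
exists (@mxtens_unindex m n) => t _; first by rewrite -surjective_pairing mxtens_indexK.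
by rewrite -surjective_pairing mxtens_unindexK.
Qed.

Definition slice N d (z : 'cV[R]_(N * d)) (k : 'I_d) : 'cV[R]_N :=
  \col_i z (mxtens_index (i, k)) 0.

Arguments slice {N d}.

Lemma quadE n (X : 'M[R]_n) (z : 'cV[R]_n) :
  (z^T *m X *m z) 0 0 = \sum_s \sum_t z t 0 * X t s * z s 0.
Proof.
rewrite mxE; apply: eq_bigr => s _; rewrite mxE mulr_suml.
by apply: eq_bigr => t _; rewrite mxE.
Qed.

Lemma nrm_slice N d (z : 'cV[R]_(N * d)) :
  (z^T *m z) 0 0 = \sum_k ((slice z k)^T *m slice z k) 0 0.
Proof.
rewrite mxE sum_tens exchange_big /=; apply: eq_bigr => k _.
rewrite mxE; apply: eq_bigr => i _; by rewrite !mxE.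
Qed.

Lemma quad_slice N d (Lap : 'M[R]_N) (z : 'cV[R]_(N * d)) :
  (z^T *m (Lap *t (1%:M : 'M[R]_d)) *m z) 0 0 =
  \sum_k ((slice z k)^T *m Lap *m slice z k) 0 0.
Proof.
rewrite quadE sum_tens.
transitivity (\sum_j \sum_l \sum_i z (mxtens_index (i, l)) 0 * Lap i j *
                               z (mxtens_index (j, l)) 0).
  apply: eq_bigr => j _; apply: eq_bigr => l _.
  rewrite sum_tens; apply: eq_bigr => i _.
  rewrite (bigD1 l) //= big1 ?addr0.
    by rewrite tensmxE mxE eqxx mulr1.
  by move=> k kl; rewrite tensmxE mxE (negbTE kl) /= !mulr0 mul0r.
rewrite exchange_big; apply: eq_bigr => l _; rewrite quadE.
apply: eq_bigr => j _; apply: eq_bigr => i _; by rewrite !mxE.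
Qed.

Lemma J_slice N d (z : 'cV[R]_(N * d)) k :
  ((ones R N *t (1%:M : 'M[R]_d))^T *m z) (mxtens_index (ord0, k)) 0 =
  ((ones R N)^T *m slice z k) 0 0.
Proof.
rewrite mxE sum_tens [RHS]mxE; apply: eq_bigr => i _.
rewrite (bigD1 k) //= big1 ?addr0.
  by rewrite !mxE !mxtens_indexK /= eqxx mulr1 mul1r.
move=> l lk; rewrite !mxE !mxtens_indexK /=.
by rewrite (negbTE lk) mulr0 mul0r.
Qed.

End Tens.

Section Dot.
Set Implicit Arguments.
Variable R : rcfType.

Definition dot n (a b : 'cV[R]_n) : R := (a^T *m b) 0 0.
Arguments dot {n}.

Lemma dotE n (a b : 'cV[R]_n) : dot a b = \sum_i a i 0 * b i 0.
Proof. by rewrite /dot mxE; apply: eq_bigr => i _; rewrite mxE. Qed.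

Lemma dotC n (a b : 'cV[R]_n) : dot a b = dot b a.
Proof. by rewrite !dotE; apply: eq_bigr => i _; rewrite mulrC. Qed.

Lemma dotDr n (a b c : 'cV[R]_n) : dot a (b + c) = dot a b + dot a c.
Proof. by rewrite /dot mulmxDr mxE. Qed.

Lemma dotBr n (a b c : 'cV[R]_n) : dot a (b - c) = dot a b - dot a c.
Proof. by rewrite /dot mulmxBr !mxE. Qed.

Lemma dotZr n (a b : 'cV[R]_n) k : dot a (k *: b) = k * dot a b.
Proof. by rewrite /dot -scalemxAr mxE. Qed.

Lemma dotDl n (a b c : 'cV[R]_n) : dot (b + c) a = dot b a + dot c a.
Proof. by rewrite dotC dotDr !(dotC a). Qed.

Lemma dotBl n (a b c : 'cV[R]_n) : dot (b - c) a = dot b a - dot c a.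
Proof. by rewrite dotC dotBr !(dotC a). Qed.

Lemma dotZl n (a b : 'cV[R]_n) k : dot (k *: b) a = k * dot b a.
Proof. by rewrite dotC dotZr dotC. Qed.

Lemma dotMr n m (a : 'cV[R]_n) (X : 'M[R]_(n, m)) b :
  dot a (X *m b) = dot (X^T *m a) b.
Proof. by rewrite /dot trmx_mul trmxK mulmxA. Qed.

Lemma dot_ge0 n (a : 'cV[R]_n) : 0 <= dot a a.
Proof. by rewrite dotE; apply: sumr_ge0 => i _; rewrite -expr2 sqr_ge0. Qed.

Lemma dot_eq0 n (a : 'cV[R]_n) : dot a a = 0 -> a = 0.
Proof.
rewrite dotE => /psumr_eq0P H; apply/matrixP => i j; rewrite [j]ord1 mxE.
have /(_ i isT) := H (fun k _ => ltac:(by rewrite -expr2 sqr_ge0)).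
by move/eqP; rewrite mulf_eq0 orbb => /eqP.
Qed.

Lemma vnormE n (a : 'cV[R]_n) : vnorm a = Num.sqrt (dot a a).
Proof. by rewrite /vnorm dotE; congr Num.sqrt; apply: eq_bigr => i _; rewrite expr2. Qed.

Lemma vnorm_ge0 n (a : 'cV[R]_n) : 0 <= vnorm a.
Proof. by rewrite vnormE sqrtr_ge0. Qed.

Lemma vnorm_sq n (a : 'cV[R]_n) : vnorm a ^+ 2 = dot a a.
Proof. by rewrite vnormE sqr_sqrtr // dot_ge0. Qed.

Lemma CS n (a b : 'cV[R]_n) : dot a b <= vnorm a * vnorm b.
Proof.
set c := dot a b.
suff h : c ^+ 2 <= dot a a * dot b b.
  apply: le_trans (ler_norm c) _.
  rewrite -sqrtr_sqr !vnormE -sqrtrM ?dot_ge0 //.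
  by rewrite ler_sqrt // mulr_ge0 ?dot_ge0.
have [b0|bn0] := eqVneq (dot b b) 0.
  by rewrite /c b0 mulr0 (@dot_eq0 _ b b0) /dot mulmx0 mxE expr0n.
have bpos : 0 < dot b b by rewrite lt_def bn0 dot_ge0.
have := dot_ge0 (dot b b *: a - c *: b).
rewrite dotBl !dotBr !dotZl !dotZr (dotC b a) -/c => H.
rewrite -(ler_pM2r bpos); rewrite -subr_ge0.
apply: le_trans H _; rewrite le_eqVlt; apply/orP; left; apply/eqP; ring.
Qed.

End Dot.
Arguments dot {R n}.

Section Main.
Variable R : rcfType.

Lemma ones_ones N : (ones R N)^T *m ones R N = (N%:R : R)%:M.
Proof.
apply/matrixP => i j; rewrite (ord1 i) (ord1 j) !mxE eqxx mulr1n.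
rewrite (eq_bigr (fun _ => 1)); last by move=> k _; rewrite !mxE mulr1.
by rewrite sumr_const card_ord.
Qed.

Lemma JtJ N d : (ones R N *t (1%:M : 'M[R]_d))^T *m (ones R N *t (1%:M : 'M[R]_d))
  = (N%:R : R)%:M.
Proof.
rewrite trmx_tens tensmx_mul ones_ones trmx1 mulmx1.
apply/matrixP => a b.
case: (mxtens_indexP a) => i0 k; case: (mxtens_indexP b) => j0 l.
rewrite tensmxE [i0]ord1 [j0]ord1 !mxE eqxx mulr1n.
rewrite (inj_eq (can_inj (@mxtens_indexK _ _))) xpair_eqE eqxx /=.
by case: (k == l); rewrite ?mulr1 ?mulr0.
Qed.

End Main.

Theorem lemma4 (R : rcfType) (N d : nat) (Lap : 'M[R]_N) (rho2 : R)
  (A : 'M[R]_(N * d)) (mu L U : R) :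
  is_laplacian Lap ->
  second_smallest_eig Lap rho2 -> 0 < rho2 ->
  A^T = A ->
  0 < mu -> mu <= L ->
  (forall a : R, eigenvalue A a -> mu <= a <= L) ->
  0 < U ->
  forall v : 'cV[R]_(N * d),
    (ones R N *t (1%:M : 'M[R]_d))^T *m v = 0 ->
    vnorm (invmx (A + U *: (Lap *t (1%:M : 'M[R]_d))) *m v)
      <= U^-1 * (L / (mu * rho2)) * vnorm v.
Proof.
move=> hL hs rho0 AT mu0 muL eigA U0 v Jv.
have [LT Loff L1] := hL.
case: N Lap A hL hs LT Loff L1 v Jv AT eigA => [|N'] Lap A hL hs LT Loff L1 v Jv AT eigA.
  by rewrite /vnorm !big_ord0 sqrtr0 mulr0.
set N := N'.+1.
set J := ones R N *t (1%:M : 'M[R]_d).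
set Lh := Lap *t (1%:M : 'M[R]_d).
have hA := @symA_bounds _ _ _ _ _ AT mu0 eigA.
have hA1 : forall y, mu * dot y y <= dot y (A *m y).
  by move=> y; have [h _] := hA y; rewrite /dot mulmxA.
have hA2 : forall y, vnorm (A *m y) <= L * vnorm y.
  move=> y; have [_ h] := hA y.
  have L0 : 0 <= L by apply: le_trans muL; apply: ltW.
  rewrite -(ler_pXn2r (isT : (0 < 2)%N)) ?nnegrE ?mulr_ge0 ?vnorm_ge0 //.
  by rewrite exprMn !vnorm_sq.
have hLh : forall z, J^T *m z = 0 -> rho2 * dot z z <= dot z (Lh *m z).
  move=> z Jz.
  rewrite /dot mulmxA nrm_slice quad_slice mulr_sumr; apply: ler_sum => k _.
  apply: (@lap_bound _ _ _ _ hL hs rho0).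
  apply/matrixP => a b; rewrite (ord1 a) (ord1 b) -J_slice -/J Jz !mxE.
  by [].
have LhT : Lh^T = Lh by rewrite /Lh trmx_tens trmx1 LT.
have LhJ : Lh *m J = 0 by rewrite /Lh /J tensmx_mul L1 tens0mx.
have JtLh : J^T *m Lh = 0 by rewrite -LhT -trmx_mul LhJ trmx0.
have Nn0 : (N%:R : R) != 0 by rewrite pnatr_eq0.
pose Pi := fun z : 'cV[R]_(N * d) => z - (N%:R^-1 : R) *: (J *m (J^T *m z)).
have pi1 : forall z, J^T *m Pi z = 0.
  move=> z; rewrite /Pi mulmxBr -scalemxAr (mulmxA J^T J) /J JtJ -/J mul_scalar_mx.
  by rewrite scalerA mulVf // scale1r subrr.
have pi2 : forall z, Lh *m Pi z = Lh *m z.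
  by move=> z; rewrite /Pi mulmxBr -scalemxAr (mulmxA Lh J) LhJ mul0mx scaler0 subr0.
have pi3 : forall z, dot z (Lh *m z) = dot (Pi z) (Lh *m Pi z).
  move=> z; transitivity (dot z (Lh *m Pi z)); first by rewrite pi2.
  by rewrite dotMr LhT dotC pi2.
have pi4 : forall z, dot z v = dot (Pi z) v.
  have Jp : forall m, dot (J *m m) v = 0.
    by move=> m; rewrite dotC dotMr Jv /dot trmx0 mul0mx mxE.
  by move=> z; rewrite /Pi dotBl dotZl Jp mulr0 subr0.
have pi5 : forall z y, dot (z - Pi z) (Lh *m y) = 0.
  move=> z y; rewrite /Pi opprB addrC subrK dotZl.
  by rewrite dotC dotMr (mulmxA J^T) JtLh mul0mx /dot trmx0 mul0mx mxE mulr0.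
have Lh_ge0 : forall z, 0 <= dot z (Lh *m z).
  move=> z; rewrite pi3; apply: le_trans (hLh _ (pi1 z)).
  by rewrite mulr_ge0 ?dot_ge0 // ltW.
set B := A + U *: Lh.
have BT : B^T = B by rewrite /B linearD linearZ /= AT LhT.
have dotB : forall z, dot z (B *m z) = dot z (A *m z) + U * dot z (Lh *m z).
  by move=> z; rewrite /B mulmxDl -scalemxAl dotDr dotZr.
have Bu : B \in unitmx.
  rewrite unitmxE unitfE; apply/negP => /det0P [r rn0 rB].
  have Bz : B *m r^T = 0 by rewrite -BT -trmx_mul rB trmx0.
  have : dot r^T (B *m r^T) = 0 by rewrite Bz /dot mulmx0 mxE.
  rewrite dotB => H.
  have : mu * dot r^T r^T <= 0.
    by apply: le_trans (hA1 _) _; rewrite -H lerDl mulr_ge0 ?Lh_ge0 // ltW.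
  rewrite pmulr_rle0 // => H2.
  have : r^T = 0 by apply: dot_eq0; apply/eqP; rewrite eq_le H2 dot_ge0.
  by move/(congr1 trmx); rewrite trmxK trmx0 => r0; move: rn0; rewrite r0 eqxx.
set x := invmx B *m v.
have Bx : B *m x = v by rewrite /x mulKVmx.
set xp := Pi x.
have s1 : dot x v = dot x (A *m x) + U * dot x (Lh *m x) by rewrite -dotB Bx.
have s2 : rho2 * dot xp xp <= dot x (Lh *m x) by rewrite pi3; apply: hLh; apply: pi1.
have s3 : dot x v <= vnorm xp * vnorm v by rewrite pi4; apply: CS.
have s4 : mu * dot x x <= dot x (A *m x) by apply: hA1.
have s4' : 0 <= dot x (A *m x) by apply: le_trans s4; rewrite mulr_ge0 ?dot_ge0 // ltW.
have h1 : U * rho2 * vnorm xp <= vnorm v.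
  have H : U * rho2 * vnorm xp * vnorm xp <= vnorm v * vnorm xp.
    have eE : U * rho2 * vnorm xp * vnorm xp = U * (rho2 * dot xp xp).
      by rewrite -vnorm_sq expr2 !mulrA.
    rewrite eE [X in _ <= X]mulrC; apply: le_trans s3; rewrite s1.
    apply: le_trans (_ : _ <= U * dot x (Lh *m x)) _.
      by rewrite ler_wpM2l // ltW.
    by rewrite lerDr s4'.
  have [xp0|xpn0] := eqVneq (vnorm xp) 0.
    by rewrite xp0 mulr0 vnorm_ge0.
  have xpp : 0 < vnorm xp by rewrite lt_def xpn0 vnorm_ge0.
  by rewrite -(ler_pM2r xpp).
have s5 : dot x (A *m x) = dot xp (A *m x).
  have E : A *m x = v - U *: (Lh *m x).
    by apply/eqP; rewrite eq_sym subr_eq -Bx /B mulmxDl scalemxAl.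
  have : dot (x - xp) (A *m x) = 0.
    rewrite E dotBr dotZr pi5 mulr0 subr0 dotBl pi4 -/xp subrr //.
  by move/eqP; rewrite dotBl subr_eq0 => /eqP.
have h2 : mu * vnorm x <= L * vnorm xp.
  have H : mu * vnorm x * vnorm x <= L * vnorm xp * vnorm x.
    rewrite -mulrA -expr2 vnorm_sq; apply: (le_trans s4).
    rewrite s5 dotMr AT; apply: le_trans (@CS _ _ (A *m xp) x) _.
    by rewrite ler_wpM2r ?vnorm_ge0.
  have [x0|xn0] := eqVneq (vnorm x) 0.
    by rewrite x0 mulr0 mulr_ge0 ?vnorm_ge0 // (le_trans (ltW mu0) muL).
  have xpos : 0 < vnorm x by rewrite lt_def xn0 vnorm_ge0.
  by rewrite -(ler_pM2r xpos).
have muUr : 0 < mu * U * rho2 by rewrite !mulr_gt0.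
have -> : U^-1 * (L / (mu * rho2)) * vnorm v = (L * vnorm v) / (mu * U * rho2).
  by field; rewrite ?gt_eqF.
rewrite ler_pdivlMr //.
have L0 : 0 <= L by apply: le_trans muL; apply: ltW.
apply: le_trans (_ : L * (U * rho2 * vnorm xp) <= _); last by rewrite ler_wpM2l.
have -> : vnorm x * (mu * U * rho2) = (U * rho2) * (mu * vnorm x) by ring.
have -> : L * (U * rho2 * vnorm xp) = (U * rho2) * (L * vnorm xp) by ring.
by rewrite ler_wpM2l // ltW // mulr_gt0.
Qed.
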